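(* For a large discrete power-law random network with $N$ nodes, exponent $\alpha$ and maximal degree $K$, the fraction of links removed at the threshold $p_c$ for random node failures is $$m(p_c) = 1 - \left(\frac{H_K^{(\alpha-1)}}{H_K^{(\alpha-2)} - H_K^{(\alpha-1)}}\right)^2,\qquad\text{where } H_K^{(s)} = \sum_{k=1}^{K} k^{-s}.$$
   Context: A random network with degree distribution $p_k$ is a configuration model: each of the $N$ nodes receives a degree drawn from $p_k$, giving that many stubs, and stubs are paired uniformly at random. A discrete power-law network with exponent $\alpha$ has $p_k\propto k^{-\alpha}$ for integers $k\ge1$; a network with $N$ nodes has finite maximal degree $K$ (a cutoff depending on $N$), and moments are computed over $1\le k\le K$. Random node failures remove a uniformly random fraction $p$ of the nodes with their incident links; $m(p)$ is the resulting fraction of removed links ($m(p)=2p-p^2$ in the large-network limit). The threshold $p_c$ is the fraction of removed nodes at which the giant component disappears; the paper uses the known formula $p_c = 1-\langle k\rangle/(\langle k^2\rangle-\langle k\rangle)$. *)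

(* Defs.v *)
From mathcomp Require Import all_boot all_order all_algebra.
From mathcomp Require Import all_classical all_reals all_analysis.
Set Implicit Arguments. Unset Strict Implicit. Unset Printing Implicit Defensive.
Import Order.TTheory GRing.Theory Num.Theory.
Local Open Scope ring_scope.

Definition harm (R : realType) (K : nat) (s : R) : R :=
  \sum_(1 <= k < K.+1) (k%:R `^ (- s)).

Definition plaw (R : realType) (alpha : R) (K k : nat) : R :=
  (k%:R `^ (- alpha)) / harm K alpha.

Definition moment (R : realType) (n : nat) (alpha : R) (K : nat) : R :=
  \sum_(1 <= k < K.+1) (k%:R ^+ n * plaw alpha K k).

Definition pc (R : realType) (alpha : R) (K : nat) : R :=
  1 - moment 1 alpha K / (moment 2 alpha K - moment 1 alpha K).

(* Fraction of removed links when a fraction p of nodes is removed. *)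
Definition mlinks (R : realType) (p : R) : R := 2 * p - p ^+ 2.

(* Main.v *)
Require Import Defs.
From mathcomp Require Import all_boot all_order all_algebra.
From mathcomp Require Import all_classical all_reals all_analysis.
From mathcomp Require Import ring.

Import Order.TTheory GRing.Theory Num.Theory.
Local Open Scope ring_scope.

Lemma aux (R : comNzRingType) (q : R) : 2 * (1 - q) - (1 - q) ^+ 2 = 1 - q ^+ 2.
Proof. ring. Qed.

Lemma harm_gt0 (R : realType) (K : nat) (s : R) : (1 <= K)%N -> 0 < harm K s.
Proof.
move=> hK; rewrite /harm big_ltn ?ltnS //.
apply: ltr_wpDr; last by apply: powR_gt0; rewrite ltr0n.
by apply: sumr_ge0 => i _; exact: powR_ge0.
Qed.

Lemma moment_eq (R : realType) (n : nat) (alpha : R) (K : nat) :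
  moment n alpha K = harm K (alpha - n%:R) / harm K alpha.
Proof.
rewrite /moment /plaw /harm mulr_suml; apply: eq_big_nat => k /andP[hk _].
rewrite mulrA; congr (_ * _).
have k0 : (0 : R) <= k%:R by rewrite ler0n.
rewrite -powR_mulrn // -powRD.
  by congr (_ `^ _); rewrite opprB addrC.
by rewrite pnatr_eq0 -lt0n hk implybT.
Qed.

Theorem mainTheorem8 (R : realType) (alpha : R) (K : nat) (hK : (1 <= K)%N) :
  mlinks (pc alpha K) =
  1 - (harm K (alpha - 1) / (harm K (alpha - 2) - harm K (alpha - 1))) ^+ 2.
Proof.
have hq : moment 1 alpha K / (moment 2 alpha K - moment 1 alpha K) =
  harm K (alpha - 1) / (harm K (alpha - 2) - harm K (alpha - 1)).
  rewrite !moment_eq -mulrBl invfM invrK.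
  have h0 : harm K alpha != 0 by rewrite gt_eqF // harm_gt0.
  by rewrite mulrA mulrAC -(mulrA _ _ (harm K alpha)) mulVf ?mulr1.
rewrite /mlinks /pc hq.
move: (harm K (alpha - 1) / _) => q.
exact: aux.
Qed.
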